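(* Let $k,\ell,n,p,s\in\mathbb{N}$, $W\subset\mathbb{R}^n$, and let $H:\mathbb{R}_{\ge0}\times\mathbb{R}^p\to\mathbb{R}^{s\times n}$ and $A:\mathbb{R}_{\ge0}\times\mathbb{R}^\ell\times\mathbb{R}^k\times\mathbb{R}^p\to\mathbb{R}^{n\times n}$ be continuous. Let $t\mapsto Q(t)\subset\mathbb{R}^\ell$ ($t\ge0$) be a set-valued map with $Q(t)\ne\emptyset$ for all $t$, satisfying the CP. For each $t_0\ge0$ let $\Omega(t_0,W)$ be a nonempty set of continuous functions $(u,y):[t_0,\infty)\to\mathbb{R}^p\times\mathbb{R}^k$ parameterized by $t_0$ and $x_0\in W$. Let $t_0\ge0$, $\tau>0$, $b>a\ge t_0+\tau$ with $b-a<\tau$, and $(u,y)\in\Omega(t_0,W)$. Assume there exist a symmetric positive definite $P\in C^1([a,b];\mathbb{R}^{n\times n})$ and $d\in C^0([a,b];\mathbb{R})$, both strongly causal on $[a,b]$ with respect to $\Omega(t_0,W)$, such that \[ e'P(t)A(t-\tau,q,y_\tau(t),u_\tau(t))e+\tfrac12e'\dot P(t)e\le-d(t)e'P(t)e\quad\forall t\in[a,b],\ e\in\ker H(t-\tau,u_\tau(t)),\ q\in Q(t-\tau), \] and $\operatorname{rank}H(t-\tau,u_\tau(t))<n$ for all $t\in[a,b]$. Then for every $\bar d\in C^0([a,b];\mathbb{R})$, strongly causal on $[a,b]$ with respect to $\Omega(t_0,W)$, with $\bar d(t)<d(t)$ for all $t\in[a,b]$, there exists $\phi\in C^1([a,b];\mathbb{R}_{>0})$,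 strongly causal on $[a,b]$ with respect to $\Omega(t_0,W)$, such that \[ e'P(t)A(t-\tau,q,y_\tau(t),u_\tau(t))e+\tfrac12e'\dot P(t)e\le\phi(t)|H(t-\tau,u_\tau(t))e|^2-\bar d(t)e'P(t)e\quad\forall t\in[a,b],\ e\in\mathbb{R}^n,\ q\in Q(t-\tau). \]
   Context: $g_\tau(t):=g(t-\tau)$ denotes the $\tau$-time shift. A set-valued map $t\mapsto Q(t)$ satisfies the Compactness Property (CP) if whenever $t_\nu\to t$ and $q_\nu\in Q(t_\nu)$, some subsequence $q_{\nu_k}$ converges to some $q\in Q(t)$. A map $t\mapsto a_{u,y}(t)$ defined for $(u,y)\in\Omega(t_0,W)$ and $t\in I$ is strongly causal on $I\cap[\alpha,\beta]$ ($\beta>\alpha\ge t_0$) with respect to $\Omega(t_0,W)$ if for every $t\in I\cap[\alpha,\beta]$ the value $a_{u,y}(t)$ depends only on the restriction $(u,y)|_{[t_0,\alpha)}$. *)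

(* Defs.v *)
From HB Require Import structures.
From mathcomp Require Import all_boot all_order all_algebra.
From mathcomp Require Import all_classical all_reals all_analysis.
Set Implicit Arguments. Unset Strict Implicit. Unset Printing Implicit Defensive.
Import Order.TTheory GRing.Theory Num.Theory.
Import numFieldNormedType.Exports.
Local Open Scope classical_set_scope.
Local Open Scope ring_scope.

Definition qf {R : realType} {n : nat} (M : 'M[R]_n) (e : 'cV[R]_n) : R :=
  (e^T *m M *m e) 0 0.

Definition sqnorm {R : realType} {m : nat} (v : 'cV[R]_m) : R :=
  (v^T *m v) 0 0.

Definition CP {R : realType} {l : nat} (Q : R -> set 'rV[R]_l) : Prop :=
  forall (tn : nat -> R) (t : R) (qn : nat -> 'rV[R]_l),
    (forall m, 0 <= tn m) -> 0 <= t ->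
    tn @ \oo --> t ->
    (forall m, Q (tn m) (qn m)) ->
    exists phi : nat -> nat,
      {homo phi : i j / (i < j)%N >-> (i < j)%N} /\
      exists2 q, Q t q & (qn \o phi) @ \oo --> q.

Definition C1_on {R : realType} (a b : R) (f f' : R -> R) : Prop :=
  (forall t, a <= t <= b ->
     (fun h : R => h^-1 * (f (t + h) - f t))
       @ within [set h : R | a <= t + h <= b] ((0 : R)^') --> f' t)
  /\ {within `[a, b], continuous f'}.

Definition C1_mx_on {R : realType} {m n : nat} (a b : R)
  (M Md : R -> 'M[R]_(m, n)) : Prop :=
  forall i j, C1_on a b (fun t => M t i j) (fun t => Md t i j).

(* Strong causality on I /\ [alpha, beta] = [alpha,beta] (here I = [a,b]
   and alpha = a, beta = b) w.r.t. the set Om of input/output pairs on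
   [t0, oo): the value at any t in [alpha, beta] depends only on the
   restriction of (u,y) to [t0, alpha). *)
Definition strongly_causal {R : realType} {p k : nat} {T : Type}
  (t0 alpha beta : R) (Om : set (R -> 'rV[R]_p * 'rV[R]_k))
  (f : (R -> 'rV[R]_p * 'rV[R]_k) -> R -> T) : Prop :=
  forall w1 w2, Om w1 -> Om w2 ->
    (forall r, t0 <= r < alpha -> w1 r = w2 r) ->
    forall t, alpha <= t <= beta -> f w1 t = f w2 t.

(* Main.v *)
Require Import Defs.
From HB Require Import structures.
From mathcomp Require Import all_boot all_order all_algebra.
From mathcomp Require Import all_classical all_reals all_analysis.
From mathcomp Require Import lra.
Import Order.TTheory GRing.Theory Num.Theory.
Import numFieldNormedType.Exports.
Local Open Scope classical_set_scope.
Local Open Scope ring_scope.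
Set Implicit Arguments. Unset Strict Implicit. Unset Printing Implicit Defensive.

Section H.
Variable R : realType.

Lemma homo_ge (f : nat -> nat) : {homo f : i j / (i < j)%N >-> (i < j)%N} ->
  forall m, (m <= f m)%N.
Proof. by move=> hf; elim=> // m ih; apply: leq_ltn_trans ih (hf _ _ (ltnSn m)). Qed.

Lemma homo_oo (f : nat -> nat) : {homo f : i j / (i < j)%N >-> (i < j)%N} ->
  f @ \oo --> \oo.
Proof.
move=> hf A [N _ NA]; exists N => // m /= Nm; apply: NA => /=.
exact: leq_trans Nm (homo_ge hf m).
Qed.

Lemma incr_homo (f : nat -> nat) : increasing_seq f -> {homo f : i j / (i < j)%N >-> (i < j)%N}.
Proof.
move=> hf i j; rewrite !ltnNge => /negP ij; apply/negP => h; apply: ij.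
have := hf j i; rewrite leEnat h. by move=> <-.
Qed.

Lemma within_seq {T U : topologicalType} (D : set T) (f : T -> U) (x_ : nat -> T) x :
  {within D, continuous f} -> D x -> (forall m, D (x_ m)) -> x_ @ \oo --> x ->
  (fun m => f (x_ m)) @ \oo --> f x.
Proof.
move=> /subspace_continuousP hf Dx Dxm xcv.
apply: (cvg_comp x_ f _ (hf x Dx)) => A /=.
rewrite /within => nA.
have := xcv _ nA.
move=> [N _ NA]; exists N => // m /= Nm; exact: NA.
Qed.
End H.
Section M.
Variable R : realType.

Definition mcvg {m n} (X_ : nat -> 'M[R]_(m, n)) (X : 'M[R]_(m, n)) :=
  forall i j, (fun k => X_ k i j) @ \oo --> X i j.

Lemma mcvg_of {m n} (X_ : nat -> 'M[R]_(m, n)) X : X_ @ \oo --> X -> mcvg X_ X.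
Proof.
move=> h i j.
have := (proj1 (@cvg_mx_entourageP _ _ _ _ _ _) h).
move=> {}h.
apply/cvg_entourageP => A eA.
have [N _ HN] := h (fmap_filter _ _) A eA.
exists N => // k /HN /(_ i j).
by rewrite inE.
Qed.

Lemma mcvg_cst {m n} (X : 'M[R]_(m, n)) : mcvg (fun=> X) X.
Proof. by move=> i j; exact: cvg_cst. Qed.

Lemma mcvg_add {m n} (X_ Y_ : nat -> 'M[R]_(m, n)) X Y :
  mcvg X_ X -> mcvg Y_ Y -> mcvg (fun k => X_ k + Y_ k) (X + Y).
Proof.
move=> hX hY i j; rewrite mxE; under eq_cvg do rewrite mxE.
exact: cvgD.
Qed.

Lemma mcvg_scale {m n} (c_ : nat -> R) (c : R) (X_ : nat -> 'M[R]_(m, n)) X :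
  c_ @ \oo --> c -> mcvg X_ X -> mcvg (fun k => c_ k *: X_ k) (c *: X).
Proof.
move=> hc hX i j; rewrite mxE; under eq_cvg do rewrite mxE.
exact: cvgM.
Qed.

Lemma mcvg_tr {m n} (X_ : nat -> 'M[R]_(m, n)) X :
  mcvg X_ X -> mcvg (fun k => (X_ k)^T) X^T.
Proof.
move=> hX i j; rewrite mxE; under eq_cvg do rewrite mxE.
exact: hX.
Qed.

Lemma mcvg_mul {m n p} (X_ : nat -> 'M[R]_(m, n)) (Y_ : nat -> 'M[R]_(n, p)) X Y :
  mcvg X_ X -> mcvg Y_ Y -> mcvg (fun k => X_ k *m Y_ k) (X *m Y).
Proof.
move=> hX hY i j; rewrite mxE; under eq_cvg do rewrite mxE.
apply: (@cvg_big _ _ +%R 0 xpredT add_continuous) => //.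
move=> l _; exact: cvgM.
Qed.

Lemma qf_cvg {n} (X_ : nat -> 'M[R]_n) (e_ : nat -> 'cV[R]_n) X e :
  mcvg X_ X -> mcvg e_ e -> (fun k => qf (X_ k) (e_ k)) @ \oo --> qf X e.
Proof.
move=> hX he; rewrite /qf.
exact: (mcvg_mul (mcvg_mul (mcvg_tr he) hX) he).
Qed.

Lemma sqnorm_cvg {m n} (X_ : nat -> 'M[R]_(m, n)) (e_ : nat -> 'cV[R]_n) X e :
  mcvg X_ X -> mcvg e_ e -> (fun k => sqnorm (X_ k *m e_ k)) @ \oo --> sqnorm (X *m e).
Proof.
move=> hX he; rewrite /sqnorm.
have h := mcvg_mul hX he.
exact: (mcvg_mul (mcvg_tr h) h).
Qed.

End M.
Section BW.
Variable R : realType.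

Lemma bnd_of (u : nat -> R) (B : R) : (forall k, `|u k| <= B) -> bounded_fun u.
Proof.
move=> hB; exists B; split; first by rewrite num_real.
move=> M BM k _ /=; exact: le_trans (hB k) (ltW BM).
Qed.

Lemma subseq_cvg (u : nat -> R) (f : nat -> nat) :
  {homo f : i j / (i < j)%N >-> (i < j)%N} -> cvgn u -> cvgn (u \o f).
Proof.
move=> hf /cvg_ex [l hl]; apply/cvg_ex; exists l.
exact: cvg_comp (homo_oo hf) hl.
Qed.

Lemma bw_vec {n} (u : nat -> 'cV[R]_n) : (forall k i, `|u k i 0| <= 1) ->
  exists f, {homo f : i j / (i < j)%N >-> (i < j)%N} /\
    exists e, mcvg (fun k => u (f k)) e.
Proof.
move=> hb.
have step : forall s : seq 'I_n, exists f, {homo f : i j / (i < j)%N >-> (i < j)%N} /\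
    forall i, i \in s -> cvgn (fun k => u (f k) i 0).
  elim=> [|i s [f [hf cf]]]; first by exists id; split.
  have [g hg cg] := bolzano_weierstrass (bnd_of (fun k => hb (f k) i)).
  have hg' := incr_homo hg.
  exists (f \o g); split.
    by move=> x y xy; apply: hf; apply: hg'.
  move=> j; rewrite inE => /orP [/eqP -> | js]; first exact: cg.
  exact: (subseq_cvg (u := fun k => u (f k) j 0) hg' (cf j js)).
have [f [hf cf]] := step (enum 'I_n).
exists f; split => //.
exists (\matrix_(i, j) lim ((fun k => u (f k) i j) @ \oo)) => i j.
rewrite mxE; have -> : j = 0 by rewrite ord1.
by apply: cf; rewrite mem_enum.
Qed.
End BW.
Section Q.
Variable R : realType.

Lemma sqnormE {n} (v : 'cV[R]_n) : sqnorm v = \sum_i (v i 0) ^+ 2.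
Proof. by rewrite /sqnorm mxE; apply: eq_bigr => i _; rewrite mxE expr2. Qed.

Lemma sqnorm_ge0 {n} (v : 'cV[R]_n) : 0 <= sqnorm v.
Proof. by rewrite sqnormE; apply: sumr_ge0 => i _; exact: sqr_ge0. Qed.

Lemma sqnorm_eq0 {n} (v : 'cV[R]_n) : sqnorm v = 0 -> v = 0.
Proof.
rewrite sqnormE => H.
have h := psumr_eq0P (fun i _ => sqr_ge0 (v i 0)) H.
apply/matrixP => i j.
rewrite ord1 mxE; apply/eqP; rewrite -sqrf_eq0; apply/eqP; exact: h.
Qed.

Lemma sqnorm0 {n} : sqnorm (0 : 'cV[R]_n) = 0.
Proof. by rewrite /sqnorm mulmx0 mxE. Qed.

Lemma qf0 {n} (M : 'M[R]_n) : qf M 0 = 0.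
Proof. by rewrite /qf mulmx0 mxE. Qed.

Lemma qfZ {n} (M : 'M[R]_n) c e : qf M (c *: e) = c ^+ 2 * qf M e.
Proof.
by rewrite /qf linearZ /= [(c *: e)^T]linearZ /= -!scalemxAl !mxE expr2 mulrA.
Qed.

Lemma sqnormZ {m n} (N : 'M[R]_(m, n)) c e : sqnorm (N *m (c *: e)) = c ^+ 2 * sqnorm (N *m e).
Proof.
by rewrite /sqnorm -scalemxAr [(c *: _)^T]linearZ /= -scalemxAl -scalemxAr !mxE expr2 mulrA.
Qed.

Lemma sqnormZ1 {n} c (e : 'cV[R]_n) : sqnorm (c *: e) = c ^+ 2 * sqnorm e.
Proof. by have := sqnormZ 1%:M c e; rewrite !mul1mx. Qed.

Lemma entry_le1 {n} (e : 'cV[R]_n) i : sqnorm e = 1 -> `|e i 0| <= 1.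
Proof.
move=> h.
have : (e i 0) ^+ 2 <= 1.
  rewrite -h sqnormE (bigD1 i) //= lerDl; apply: sumr_ge0 => j _; exact: sqr_ge0.
move: (e i 0) => y hy; rewrite ler_norml; apply/andP; split; nra.
Qed.
End Q.
Section Core.
Variable R : realType.

Lemma core (l n s : nat) (a b : R) (K : R -> 'rV[R]_l -> 'M[R]_n)
  (N : R -> 'M[R]_(s, n)) (Qs : R -> set 'rV[R]_l) :
  (forall (T_ : nat -> R) t (q_ : nat -> 'rV[R]_l) q,
     (forall k, a <= T_ k <= b) -> a <= t <= b -> T_ @ \oo --> t ->
     (forall k, Qs (T_ k) (q_ k)) -> Qs t q -> q_ @ \oo --> q ->
     mcvg (fun k => K (T_ k) (q_ k)) (K t q)) ->
  (forall (T_ : nat -> R) t, (forall k, a <= T_ k <= b) -> a <= t <= b ->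
     T_ @ \oo --> t -> mcvg (fun k => N (T_ k)) (N t)) ->
  (forall (T_ : nat -> R) t (q_ : nat -> 'rV[R]_l),
     (forall k, a <= T_ k <= b) -> a <= t <= b -> T_ @ \oo --> t ->
     (forall k, Qs (T_ k) (q_ k)) ->
     exists phi : nat -> nat, {homo phi : i j / (i < j)%N >-> (i < j)%N} /\
       exists2 q, Qs t q & (q_ \o phi) @ \oo --> q) ->
  (forall t q e, a <= t <= b -> Qs t q -> e != 0 -> N t *m e = 0 ->
     qf (K t q) e < 0) ->
  exists c, 0 < c /\ forall t q e, a <= t <= b -> Qs t q ->
     qf (K t q) e <= c * sqnorm (N t *m e).
Proof.
move=> hK hN hQ hker.
apply: contrapT => nex.
have bad k : exists x : R * 'rV[R]_l * 'cV[R]_n,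
    [/\ a <= x.1.1 <= b, Qs x.1.1 x.1.2, sqnorm x.2 = 1 &
        (k.+1)%:R * sqnorm (N x.1.1 *m x.2) < qf (K x.1.1 x.1.2) x.2].
  apply: contrapT => hk; apply: nex; exists (k.+1)%:R; split => // t q e ht hq.
  rewrite leNgt; apply/negP => lt; apply: hk.
  have e0 : e != 0.
    by apply: contraTneq lt => ->; rewrite qf0 mulmx0 sqnorm0 mulr0 ltxx.
  have sp : 0 < sqnorm e.
    rewrite lt_neqAle sqnorm_ge0 andbT eq_sym; apply: contra e0 => /eqP.
    by move/sqnorm_eq0 => ->.
  set c := (Num.sqrt (sqnorm e))^-1.
  have c2 : c ^+ 2 = (sqnorm e)^-1 by rewrite /c exprVn sqr_sqrtr // ltW.
  exists (t, q, c *: e); split => //=.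
    by rewrite sqnormZ1 c2 mulVf // gt_eqF.
  rewrite sqnormZ qfZ mulrCA; rewrite ltr_pM2l //.
  by rewrite c2 invr_gt0.
have [x hx] := choice bad.
pose T_ k := (x k).1.1; pose q_ k := (x k).1.2; pose E_ k := (x k).2.
have hT k : a <= T_ k <= b by have [] := hx k.
have hq k : Qs (T_ k) (q_ k) by have [] := hx k.
have hE k : sqnorm (E_ k) = 1 by have [] := hx k.
have hI k : (k.+1)%:R * sqnorm (N (T_ k) *m E_ k) < qf (K (T_ k) (q_ k)) (E_ k).
  by have [] := hx k.
have bT : forall k, `|T_ k| <= `|a| + `|b|.
  move=> k; have /andP[h1 h2] := hT k.
  have := ler_norml a `|a|; rewrite lexx => /esym/andP[a1 a2].
  have := ler_norml b `|b|; rewrite lexx => /esym/andP[b1 b2].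
  rewrite ler_norml; apply/andP; split; lra.
have [g1 hg1 cg1] := bolzano_weierstrass (bnd_of bT).
have hg1' := incr_homo hg1.
set t := lim ((T_ \o g1) @ \oo).
have Tt1 : (T_ \o g1) @ \oo --> t by [].
have ht : a <= t <= b.
  apply/andP; split.
    by apply: limr_ge => //; apply: nearW => k; have /andP[] := hT (g1 k).
  by apply: limr_le => //; apply: nearW => k; have /andP[] := hT (g1 k).
have [phi [hphi [q hqq cq]]] := hQ (T_ \o g1) t (q_ \o g1) (fun k => hT (g1 k)) ht Tt1
  (fun k => hq (g1 k)).
pose g2 := g1 \o phi.
have hg2 : {homo g2 : i j / (i < j)%N >-> (i < j)%N}.
  by move=> i j ij; apply: hg1'; apply: hphi.
have be k i : `|E_ (g2 k) i 0| <= 1 by apply: entry_le1.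
have [psi [hpsi [e he]]] := bw_vec be.
pose g := g2 \o psi.
have hg : {homo g : i j / (i < j)%N >-> (i < j)%N}.
  by move=> i j ij; apply: hg2; apply: hpsi.
have Tt : (T_ \o g) @ \oo --> t.
  by apply: (cvg_comp _ _ (homo_oo (fun i j ij => hphi _ _ (hpsi _ _ ij))) Tt1).
have qq : (q_ \o g) @ \oo --> q.
  by apply: (cvg_comp _ _ (homo_oo hpsi) cq).
have Ee : mcvg (fun k => E_ (g k)) e by [].
have KK := hK (T_ \o g) t (q_ \o g) q (fun k => hT (g k)) ht Tt (fun k => hq (g k)) hqq qq.
have NN := hN (T_ \o g) t (fun k => hT (g k)) ht Tt.
have cal := qf_cvg KK Ee.
have cbe := sqnorm_cvg NN Ee.
have cs : (fun k => sqnorm (E_ (g k))) @ \oo --> sqnorm e.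
  exact: (mcvg_mul (mcvg_tr Ee) Ee).
have se : sqnorm e = 1.
  have fe : (fun k => sqnorm (E_ (g k))) = fun=> 1 by apply: funext => k; exact: hE.
  rewrite fe in cs; have := cvg_lim (@Rhausdorff R) cs.
  by rewrite lim_cst // => <-.
have e0 : e != 0 by apply/eqP => e0; move: se; rewrite e0 sqnorm0 => /eqP; rewrite eq_sym oner_eq0.
have bge k : 0 <= sqnorm (N (T_ (g k)) *m E_ (g k)) by exact: sqnorm_ge0.
have age k : 0 <= qf (K (T_ (g k)) (q_ (g k))) (E_ (g k)).
  apply: le_trans (ltW (hI (g k))); apply: mulr_ge0 => //; exact: bge.
have al0 : 0 <= qf (K t q) e.
  rewrite -(cvg_lim (@Rhausdorff R) cal).
  by apply: limr_ge; [apply/cvg_ex; eexists; exact: cal | apply: nearW].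
set al := qf (K t q) e.
set be' := sqnorm (N t *m e).
have be0 : be' = 0.
  apply/eqP; rewrite eq_le sqnorm_ge0 andbT leNgt; apply/negP => bpos.
  have hlt : be' / 2 < be' by rewrite ltr_pdivrMr // ltr_pMr // ltr1n.
  have [N1 _ H1] := cvgr_ge _ cbe _ hlt.
  have hlt2 : al < al + 1 by rewrite ltrDl ltr01.
  have [N2 _ H2] := cvgr_le _ cal _ hlt2.
  pose M := Num.Def.archi_bound ((al + 1) / (be' / 2)).
  have hM : (al + 1) / (be' / 2) < M%:R by apply: archi_boundP; rewrite divr_ge0 ?addr_ge0 ?divr_ge0 // ltW.
  pose k := (N1 + N2 + M)%N.
  have k1 := H1 k (leq_trans (leq_addr _ _) (leq_addr _ _)).
  have k2 := H2 k (leq_trans (leq_addl _ _) (leq_addr _ _)).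
  have gk : (M <= g k)%N := leq_trans (leq_addl _ _) (homo_ge hg k).
  have := hI (g k); rewrite ltNge => /negP; apply.
  apply: le_trans k2 _ => /=.
  apply: (@le_trans _ _ (M%:R * (be' / 2))).
    by rewrite -ler_pdivrMr ?divr_gt0 // ltW.
  apply: ler_pM => //; first by rewrite divr_ge0 // ltW.
  by rewrite ler_nat; apply: leqW.
have := hker t q e ht hqq e0 (sqnorm_eq0 be0).
by rewrite ltNge al0.
Qed.
End Core.
Section C1.
Variable R : realType.
Lemma C1_seq (a b : R) f f' (T_ : nat -> R) t : C1_on a b f f' ->
  (forall k, a <= T_ k <= b) -> a <= t <= b -> T_ @ \oo --> t ->
  (fun k => f (T_ k)) @ \oo --> f t.
Proof.
move=> [hd _] hT ht cT.
have := hd t ht; move/cvgrPdist_lt => /(_ 1 ltr01).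
move=> /nbhs_ballP [del /= del0 Hd].
apply/cvgrPdist_lt => eps eps0.
set C := `|f' t| + 1.
have C0 : 0 < C by rewrite /C ltr_pwDr.
set r := Num.min del (eps / C).
have r0 : 0 < r by rewrite /r lt_min del0 divr_gt0.
move/cvgrPdist_lt: cT => /(_ r r0); apply: filterS => k hk.
set h := T_ k - t.
have Tk : T_ k = t + h by rewrite /h addrC subrK.
have [h0|h0] := eqVneq h 0.
  by rewrite Tk h0 addr0 subrr normr0.
have hb : ball 0 del h.
  rewrite /ball /= sub0r normrN /h distrC.
  by apply: lt_le_trans hk _; rewrite /r ge_min lexx.
have := Hd h hb h0; rewrite -Tk => /(_ (hT k)) H1.
have H2 : `|h^-1 * (f (T_ k) - f t)| < C.
  have := ler_distD (f' t) (h^-1 * (f (T_ k) - f t)) 0.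
  rewrite subr0 /C => H3.
  apply: le_lt_trans H3 _; rewrite distrC subr0; lra.
have -> : f t - f (T_ k) = - (h * (h^-1 * (f (T_ k) - f t))).
  by rewrite mulrA mulfV // mul1r opprB.
rewrite normrN normrM.
have hr : `|h| < eps / C.
  rewrite /h distrC; apply: lt_le_trans hk _; rewrite /r ge_min lexx orbT //.
rewrite -(@ltr_pM2r _ C) // in hr; rewrite mulfVK ?gt_eqF // in hr.
apply: le_lt_trans hr; apply: ler_wpM2l => //; exact: ltW.
Qed.
End C1.
Section P.
Variable R : realType.
Lemma cvg_fst_seq {U V : topologicalType} (u : nat -> U * V) (z : U * V) :
  u @ \oo --> z -> (fun k => (u k).1) @ \oo --> z.1.
Proof.
move=> h A nA; apply: (h [set p | A p.1]); exists (A, setT) => //=; first by split => //; exact: filterT.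
by move=> [p1 p2] [/= Ap _].
Qed.
Lemma cvg_snd_seq {U V : topologicalType} (u : nat -> U * V) (z : U * V) :
  u @ \oo --> z -> (fun k => (u k).2) @ \oo --> z.2.
Proof.
move=> h A nA; apply: (h [set p | A p.2]); exists (setT, A) => //=; first by split => //; exact: filterT.
by move=> [p1 p2] [/= _ Ap].
Qed.
End P.

Section Lin.
Variable R : realType.
Lemma qfD {n} (M1 M2 : 'M[R]_n) e : qf (M1 + M2) e = qf M1 e + qf M2 e.
Proof. by rewrite /qf mulmxDr mulmxDl mxE. Qed.
Lemma qfZl {n} c (M : 'M[R]_n) e : qf (c *: M) e = c * qf M e.
Proof. by rewrite /qf -scalemxAr -scalemxAl mxE. Qed.
End Lin.

Unset Implicit Arguments.
Set Strict Implicit.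

Theorem lemma3p4 (R : realType) (k l n p s : nat) (W : set 'rV[R]_n)
  (H : R -> 'rV[R]_p -> 'M[R]_(s, n))
  (A : R -> 'rV[R]_l -> 'rV[R]_k -> 'rV[R]_p -> 'M[R]_n)
  (Q : R -> set 'rV[R]_l)
  (Om : R -> set 'rV[R]_n -> set (R -> 'rV[R]_p * 'rV[R]_k))
  (t0 tau a b : R) (w : R -> 'rV[R]_p * 'rV[R]_k)
  (P : (R -> 'rV[R]_p * 'rV[R]_k) -> R -> 'M[R]_n) (Pd : R -> 'M[R]_n)
  (d : (R -> 'rV[R]_p * 'rV[R]_k) -> R -> R) :
  {within [set z : R * 'rV[R]_p | 0 <= z.1], continuous (fun z => H z.1 z.2)} ->
  {within [set z : R * ('rV[R]_l * ('rV[R]_k * 'rV[R]_p)) | 0 <= z.1],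
     continuous (fun z => A z.1 z.2.1 z.2.2.1 z.2.2.2)} ->
  (forall t, 0 <= t -> Q t !=set0) ->
  CP Q ->
  (forall t1, 0 <= t1 -> Om t1 W !=set0) ->
  (forall t1 v, 0 <= t1 -> Om t1 W v -> {within [set r | t1 <= r], continuous v}) ->
  0 <= t0 -> 0 < tau -> t0 + tau <= a -> a < b -> b - a < tau ->
  Om t0 W w ->
  (* P symmetric positive definite and C^1 on [a,b], with derivative Pd *)
  (forall t, a <= t <= b -> (P w t)^T = P w t) ->
  (forall t e, a <= t <= b -> e != 0 -> 0 < qf (P w t) e) ->
  C1_mx_on a b (P w) Pd ->
  {within `[a, b], continuous (d w)} ->
  strongly_causal t0 a b (Om t0 W) P ->
  strongly_causal t0 a b (Om t0 W) d ->
  (forall t e q, a <= t <= b ->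
     H (t - tau) (w (t - tau)).1 *m e = 0 ->
     Q (t - tau) q ->
     qf (P w t *m A (t - tau) q (w (t - tau)).2 (w (t - tau)).1) e
       + 2^-1 * qf (Pd t) e <= - d w t * qf (P w t) e) ->
  (forall t, a <= t <= b -> leq (\rank (H (t - tau) (w (t - tau)).1)).+1 n) ->
  forall dbar : (R -> 'rV[R]_p * 'rV[R]_k) -> R -> R,
    {within `[a, b], continuous (dbar w)} ->
    strongly_causal t0 a b (Om t0 W) dbar ->
    (forall t, a <= t <= b -> dbar w t < d w t) ->
    exists phi : (R -> 'rV[R]_p * 'rV[R]_k) -> R -> R,
      strongly_causal t0 a b (Om t0 W) phi /\
      (exists phid : R -> R, C1_on a b (phi w) phid) /\
      (forall t, a <= t <= b -> 0 < phi w t) /\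
      (forall t e q, a <= t <= b -> Q (t - tau) q ->
         qf (P w t *m A (t - tau) q (w (t - tau)).2 (w (t - tau)).1) e
           + 2^-1 * qf (Pd t) e
         <= phi w t * sqnorm (H (t - tau) (w (t - tau)).1 *m e)
            - dbar w t * qf (P w t) e).
Proof.
move=> Hc Ac Qne CPQ Omne wc t00 tau0 ta ab bat wOm Psym Ppos PC1 dc Pcaus dcaus
  hyp rk dbar dbc dbcaus dbd.
have itv x : a <= x <= b -> `[a, b]%classic x.
  by move=> hx; rewrite /= in_itv /= hx.
have wcv : forall (T_ : nat -> R) t, (forall k, a <= T_ k <= b) -> a <= t <= b ->
    T_ @ \oo --> t -> (fun k => w (T_ k - tau)) @ \oo --> w (t - tau).
  move=> T_ t hT ht cT.
  apply: (within_seq (D := [set r | t0 <= r]) (wc t0 w t00 wOm)).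
  - by move: ht => /andP[h1 h2] /=; lra.
  - by move=> j; have /andP[h1 h2] := hT j; rewrite /=; lra.
  - by apply: cvgB => //; exact: cvg_cst.
have Tcv : forall (T_ : nat -> R) t, T_ @ \oo --> t ->
    (fun k => T_ k - tau) @ \oo --> t - tau.
  by move=> T_ t cT; apply: cvgB => //; exact: cvg_cst.
have key := @core R l n s a b
  (fun t q => P w t *m A (t - tau) q (w (t - tau)).2 (w (t - tau)).1
     + 2^-1 *: Pd t + dbar w t *: P w t)
  (fun t => H (t - tau) (w (t - tau)).1) (fun t => Q (t - tau)).
have [c [c0 hc]] : exists c, 0 < c /\ forall t q e, a <= t <= b -> Q (t - tau) q ->
     qf (P w t *m A (t - tau) q (w (t - tau)).2 (w (t - tau)).1
     + 2^-1 *: Pd t + dbar w t *: P w t) e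
       <= c * sqnorm (H (t - tau) (w (t - tau)).1 *m e).
  apply: key.
  - move=> T_ t q_ q hT ht cT hq hqq cq.
    have Pcv : mcvg (fun k => P w (T_ k)) (P w t).
      by move=> i j; exact: (C1_seq (PC1 i j) hT ht cT).
    have Pdcv : mcvg (fun k => Pd (T_ k)) (Pd t).
      by move=> i j; exact: (within_seq (PC1 i j).2 (itv _ ht) (fun k => itv _ (hT k)) cT).
    have dbcv : (fun k => dbar w (T_ k)) @ \oo --> dbar w t.
      exact: (within_seq dbc (itv _ ht) (fun k => itv _ (hT k)) cT).
    have wc' := wcv T_ t hT ht cT.
    have zc : (fun k => (T_ k - tau, (q_ k, ((w (T_ k - tau)).2, (w (T_ k - tau)).1))))
        @ \oo --> (t - tau, (q, ((w (t - tau)).2, (w (t - tau)).1))).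
      exact: (cvg_pair (Tcv T_ t cT) (cvg_pair cq
       (cvg_pair (cvg_snd_seq wc') (cvg_fst_seq wc')))).
    have Acv := within_seq Ac _ _ zc.
    apply: mcvg_add; first apply: mcvg_add.
    + apply: mcvg_mul => //; apply: mcvg_of; apply: Acv.
      * by move: ht => /andP[h1 h2] /=; lra.
      * by move=> j; have /andP[h1 h2] := hT j; rewrite /=; lra.
    + by apply: mcvg_scale => //; exact: cvg_cst.
    + exact: mcvg_scale.
  - move=> T_ t hT ht cT.
    have wc' := wcv T_ t hT ht cT.
    have zc : (fun k => (T_ k - tau, (w (T_ k - tau)).1))
        @ \oo --> (t - tau, (w (t - tau)).1).
      exact: (cvg_pair (Tcv T_ t cT) (cvg_fst_seq wc')).
    apply: mcvg_of; apply: (within_seq Hc _ _ zc).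
    + by move: ht => /andP[h1 h2] /=; lra.
    + by move=> j; have /andP[h1 h2] := hT j; rewrite /=; lra.
  - move=> T_ t q_ hT ht cT hq.
    apply: (CPQ (fun k => T_ k - tau) (t - tau) q_) => //.
    + by move=> j; have /andP[h1 h2] := hT j; lra.
    + by move: ht => /andP[h1 h2]; lra.
    + exact: Tcv.
  - move=> t q e ht hq e0 He.
    have h1 := hyp t e q ht He hq.
    have h2 := Ppos t e ht e0.
    have h3 := dbd t ht.
    rewrite qfD qfD qfZl qfZl.
    have h4 : 0 < (d w t - dbar w t) * qf (P w t) e by apply: mulr_gt0 => //; rewrite subr_gt0.
    rewrite mulrBl in h4; rewrite mulNr in h1; lra.
exists (fun _ _ => c); split; first by [].
split.
  exists (fun _ => 0); split.
    move=> t' _; have -> : (fun h : R => h^-1 * (c - c)) = fun=> 0.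
      by apply: funext => h; rewrite subrr mulr0.
    exact: cvg_cst.
  by apply: continuous_subspaceT; exact: cst_continuous.
split; first by [].
move=> t e q ht hq; have := hc t q e ht hq; rewrite qfD qfD qfZl qfZl; lra.
Qed.
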